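(* Let $T$ be a continuous Archimedean $t$-norm and $A$ a fuzzy interval in $\mathbb R$. For $n\ge1$ let $A_n=Ave_*(A,\dots,A)$ ($n$ arguments), i.e. $A_n(z)=\sup\{T(A(x_1),\dots,A(x_n)) : \frac1n\sum_{j=1}^n x_j=z\}$. Then $(A_n)_{n\ge1}$ converges levelwise to the crisp fuzzy set $\mathbf 1_{\mathbb M A}$, i.e. for every $\alpha\in(0,1]$, $A_n^\alpha\to\mathbb M A$ in the Hausdorff metric.
   Context: A $t$-norm is a commutative, associative map $T:[0,1]^2\to[0,1]$, non-decreasing in each variable, with neutral element $1$, extended to finitely many arguments by associativity. A continuous $t$-norm is Archimedean if for all $x,y\in(0,1)$ there is $n$ with $T(x,\dots,x)$ ($n$ arguments) $<y$. A fuzzy interval in $\mathbb R$ is a map $A:\mathbb R\to[0,1]$ attaining $1$ whose $\alpha$-cuts $A^\alpha=\{A\ge\alpha\}$, $\alpha\in(0,1]$, are nonempty compact intervals; $\mathbb M A=A^1$. Levelwise convergence means convergence of every $\alpha$-cut, $\alpha\in(0,1]$, in the Hausdorff metric on nonempty compact subsets of $\mathbb R$. *)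

(* Defs.v *)
From Stdlib Require Import Reals Lra List.
Import ListNotations.
Open Scope R_scope.

Definition unit_int (x : R) : Prop := 0 <= x <= 1.

Definition is_tnorm (T : R -> R -> R) : Prop :=
  (forall x y, unit_int x -> unit_int y -> unit_int (T x y)) /\
  (forall x y, unit_int x -> unit_int y -> T x y = T y x) /\
  (forall x y z, unit_int x -> unit_int y -> unit_int z ->
       T x (T y z) = T (T x y) z) /\
  (forall x x' y, unit_int x -> unit_int x' -> unit_int y ->
       x <= x' -> T x y <= T x' y) /\
  (forall x, unit_int x -> T x 1 = x).

Definition tnorm_continuous (T : R -> R -> R) : Prop :=
  forall x y, unit_int x -> unit_int y ->
  forall eps, 0 < eps -> exists delta, 0 < delta /\
    forall x' y', unit_int x' -> unit_int y' ->
      Rabs (x - x') < delta -> Rabs (y - y') < delta ->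
      Rabs (T x y - T x' y') < eps.

(* n-ary extension by associativity: T(a1,...,an) = T a1 (T a2 (... (T an 1))) *)
Definition Tn (T : R -> R -> R) (l : list R) : R := fold_right T 1 l.

Definition tnorm_archimedean (T : R -> R -> R) : Prop :=
  forall x y, 0 < x < 1 -> 0 < y < 1 ->
    exists n : nat, Tn T (repeat x n) < y.

Definition fuzzy_interval (A : R -> R) : Prop :=
  (forall x, unit_int (A x)) /\
  (exists x, A x = 1) /\
  (forall alpha, 0 < alpha <= 1 ->
     exists a b, a <= b /\ forall x, alpha <= A x <-> a <= x <= b).

Definition sumR (l : list R) : R := fold_right Rplus 0 l.

(* the set whose supremum defines Ave_*(A,...,A)(z) with n arguments *)
Definition ave_set (T : R -> R -> R) (A : R -> R) (n : nat) (z : R) (t : R) : Prop :=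
  exists xs : list R, length xs = n /\ sumR xs / INR n = z /\ t = Tn T (map A xs).

(* Hausdorff-metric convergence of sets S n to a (nonempty compact) set K:
   eventually each set lies in the closed eps-neighbourhood of the other. *)
Definition hausdorff_conv (S : nat -> R -> Prop) (K : R -> Prop) : Prop :=
  forall eps, 0 < eps -> exists N : nat, forall n, (N <= n)%nat ->
    (forall x, S n x -> exists y, K y /\ Rabs (x - y) <= eps) /\
    (forall y, K y -> exists x, S n x /\ Rabs (x - y) <= eps).

(* Main.v *)
Require Import Defs.
From Stdlib Require Import Reals Lra Lia List Classical.
Open Scope R_scope.

Section Aux.
Variable T : R -> R -> R.
Hypothesis HT : is_tnorm T.

Lemma T_unit x y : unit_int x -> unit_int y -> unit_int (T x y).
Proof. destruct HT as [H _]; auto. Qed.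

Lemma T_mono_l x x' y : unit_int x -> unit_int x' -> unit_int y -> x <= x' -> T x y <= T x' y.
Proof. destruct HT as [_ [_ [_ [H _]]]]; auto. Qed.

Lemma T_comm x y : unit_int x -> unit_int y -> T x y = T y x.
Proof. destruct HT as [_ [H _]]; auto. Qed.

Lemma T_one x : unit_int x -> T x 1 = x.
Proof. destruct HT as [_ [_ [_ [_ H]]]]; auto. Qed.

Lemma unit1 : unit_int 1. Proof. unfold unit_int; lra. Qed.

Lemma T_mono_r x y y' : unit_int x -> unit_int y -> unit_int y' -> y <= y' -> T x y <= T x y'.
Proof.
  intros. rewrite (T_comm x y), (T_comm x y'); auto. apply T_mono_l; auto.
Qed.

Lemma T_le_l x y : unit_int x -> unit_int y -> T x y <= x.
Proof.
  intros Hx Hy. rewrite <- (T_one x) at 2; auto.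
  apply T_mono_r; auto using unit1. destruct Hy; lra.
Qed.

Lemma T_le_r x y : unit_int x -> unit_int y -> T x y <= y.
Proof.
  intros Hx Hy. rewrite T_comm; auto. apply T_le_l; auto.
Qed.

Variable A : R -> R.
Hypothesis HA0 : forall x, unit_int (A x).

Lemma Tn_unit_map xs : unit_int (Tn T (map A xs)).
Proof. induction xs; simpl. apply unit1. apply T_unit; auto. Qed.

Lemma Tn_unit_rep c k : unit_int c -> unit_int (Tn T (repeat c k)).
Proof. intros Hc; induction k; simpl. apply unit1. apply T_unit; auto. Qed.

Lemma Tn_le_in x xs : In x xs -> Tn T (map A xs) <= A x.
Proof.
  induction xs as [|y xs IH]; simpl; intros H. contradiction.
  destruct H as [<-|H]. apply T_le_l; auto using Tn_unit_map.
  eapply Rle_trans. apply T_le_r; auto using Tn_unit_map. auto.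
Qed.

Lemma Tn_rep_mono c k k' : unit_int c -> (k <= k')%nat ->
  Tn T (repeat c k') <= Tn T (repeat c k).
Proof.
  intros Hc H. induction H. lra.
  eapply Rle_trans; [|exact IHle]. simpl. apply T_le_r; auto using Tn_unit_rep.
Qed.

Fixpoint cnt (P : R -> Prop) (Pd : forall x, {P x} + {~ P x}) (xs : list R) : nat :=
  match xs with
  | nil => O
  | x :: xs => if Pd x then S (cnt P Pd xs) else cnt P Pd xs
  end.

Lemma Tn_bound P Pd c xs : unit_int c -> (forall x, P x -> A x <= c) ->
  Tn T (map A xs) <= Tn T (repeat c (cnt P Pd xs)).
Proof.
  intros Hc HP. induction xs as [|x xs IH]; simpl. lra.
  destruct (Pd x) as [Hx|Hx]; simpl.
  - apply Rle_trans with (T c (Tn T (map A xs))).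
    apply T_mono_l; auto using Tn_unit_map.
    apply T_mono_r; auto using Tn_unit_map, Tn_unit_rep.
  - eapply Rle_trans. apply T_le_r; auto using Tn_unit_map. auto.
Qed.

End Aux.

Lemma sum_boundR b d M xs : (forall x, In x xs -> x < b + M) -> d <= M ->
  sumR xs <= INR (length xs) * (b + d) +
     INR (cnt (fun x => b + d <= x) (fun x => Rle_dec (b + d) x) xs) * (M - d).
Proof.
  intros H Hd. induction xs as [|x xs IH]; cbn [length sumR fold_right cnt].
  simpl; lra.
  change (sumR xs) with (fold_right Rplus 0 xs) in *.
  assert (Hx : x < b + M) by (apply H; simpl; auto).
  assert (IH' := IH (fun y Hy => H y (or_intror Hy))).
  rewrite S_INR.
  destruct (Rle_dec (b + d) x); [rewrite S_INR|]; lra.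
Qed.

Lemma sum_boundL a d M xs : (forall x, In x xs -> a - M < x) -> d <= M ->
  INR (length xs) * (a - d) -
     INR (cnt (fun x => x <= a - d) (fun x => Rle_dec x (a - d)) xs) * (M - d) <= sumR xs.
Proof.
  intros H Hd. induction xs as [|x xs IH]; cbn [length sumR fold_right cnt].
  simpl; lra.
  change (sumR xs) with (fold_right Rplus 0 xs) in *.
  assert (Hx : a - M < x) by (apply H; simpl; auto).
  assert (IH' := IH (fun y Hy => H y (or_intror Hy))).
  rewrite S_INR.
  destruct (Rle_dec x (a - d)); [rewrite S_INR|]; lra.
Qed.

Lemma tailR (A : R -> R) (HA : fuzzy_interval A) b1 u x :
  1 <= A b1 -> b1 <= u -> u <= x -> A x <= A u.
Proof.
  intros Hb Hu Hx. destruct HA as [H0 [_ Hc]].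
  destruct (Rle_dec (A x) (A u)) as [h|h]; auto. exfalso.
  assert (Hu0 := H0 u). assert (Hx0 := H0 x). unfold unit_int in *.
  destruct (Hc (A x) ltac:(lra)) as [a [b [Hab Hi]]].
  destruct (proj1 (Hi x) ltac:(lra)). destruct (proj1 (Hi b1) ltac:(lra)).
  assert (A x <= A u) by (apply Hi; lra). lra.
Qed.

Lemma tailL (A : R -> R) (HA : fuzzy_interval A) a1 u x :
  1 <= A a1 -> u <= a1 -> x <= u -> A x <= A u.
Proof.
  intros Hb Hu Hx. destruct HA as [H0 [_ Hc]].
  destruct (Rle_dec (A x) (A u)) as [h|h]; auto. exfalso.
  assert (Hu0 := H0 u). assert (Hx0 := H0 x). unfold unit_int in *.
  destruct (Hc (A x) ltac:(lra)) as [a [b [Hab Hi]]].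
  destruct (proj1 (Hi x) ltac:(lra)). destruct (proj1 (Hi a1) ltac:(lra)).
  assert (A x <= A u) by (apply Hi; lra). lra.
Qed.

Lemma k0_exists T (HT : is_tnorm T) (HTa : tnorm_archimedean T) c alpha :
  unit_int c -> c < 1 -> 0 < alpha <= 1 -> exists k0, Tn T (repeat c k0) < alpha.
Proof.
  intros Hc Hc1 Ha. unfold unit_int in Hc.
  destruct (Req_dec c 0) as [->|Hc0].
  - exists 1%nat. simpl. rewrite T_one; auto using unit1. lra.
  - destruct (Req_dec alpha 1) as [->|Ha1].
    + exists 1%nat. simpl. rewrite T_one; auto.
    + apply HTa; lra.
Qed.

Lemma N_exists (k0 : nat) (d K : R) : 0 < d ->
  exists N : nat, INR k0 * K <= INR N * d.
Proof.
  intros Hd. destruct (INR_unbounded (INR k0 * K / d)) as [N HN].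
  exists N. apply Rmult_gt_compat_r with (r := d) in HN; auto.
  unfold Rdiv in HN. rewrite Rmult_assoc, Rinv_l in HN; lra.
Qed.

Lemma right_side (T : R -> R -> R) (A : R -> R) (An : nat -> R -> R)
  (HT : is_tnorm T) (HTa : tnorm_archimedean T) (HA : fuzzy_interval A)
  (HAn : forall n z, (1 <= n)%nat -> is_lub (ave_set T A n z) (An n z))
  b1 (Hb1 : 1 <= A b1) (Hcore : forall x, 1 <= A x -> x <= b1)
  alpha (Hal : 0 < alpha <= 1) eps (Heps : 0 < eps) :
  exists N : nat, forall n, (N <= n)%nat -> forall z, alpha <= An (S n) z -> z <= b1 + eps.
Proof.
  assert (HA0 : forall x, unit_int (A x)) by apply HA.
  set (d := eps / 2).
  assert (Hd : 0 < d) by (unfold d; lra).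
  set (c := A (b1 + d)).
  assert (Hc1 : c < 1).
  { destruct (Rlt_dec c 1); auto. assert (b1 + d <= b1) by (apply Hcore; unfold c in *; lra). lra. }
  destruct (k0_exists T HT HTa c alpha (HA0 _) Hc1 Hal) as [k0 Hk0].
  destruct HA as [H0 [H1 Hcut]].
  destruct (Hcut alpha Hal) as [a [b [Hab Hi]]].
  set (M := Rmax (b - b1 + 1) (2 * d)).
  assert (HM1 : b - b1 + 1 <= M) by apply Rmax_l.
  assert (HM2 : 2 * d <= M) by apply Rmax_r.
  set (m := A (b1 + M)).
  assert (Hm : m < alpha).
  { destruct (Rlt_dec m alpha); auto. assert (b1 + M <= b) by (apply Hi; unfold m in *; lra). lra. }
  destruct (N_exists k0 d (M - d) Hd) as [N HN].
  exists N. intros n Hn z Hz.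
  destruct (Rle_dec z (b1 + eps)) as [h|h]; auto. exfalso.
  set (beta := Rmax m (Tn T (repeat c k0))).
  assert (Hbeta : beta < alpha) by (unfold beta; apply Rmax_lub_lt; auto).
  assert (HAnb : An (S n) z <= beta).
  { apply (HAn (S n) z ltac:(lia)). intros t [xs [Hlen [Hsum ->]]].
    destruct (classic (exists x, In x xs /\ b1 + M <= x)) as [[x [Hx1 Hx2]]|Hno].
    - eapply Rle_trans. apply (Tn_le_in T HT A HA0 x xs Hx1).
      eapply Rle_trans. apply (tailR A (conj H0 (conj H1 Hcut)) b1 (b1 + M) x); auto; lra.
      apply Rmax_l.
    - assert (Hall : forall x, In x xs -> x < b1 + M).
      { intros x Hx. destruct (Rlt_dec x (b1 + M)); auto. exfalso; apply Hno; exists x; split; auto; lra. }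
      pose proof (sum_boundR b1 d M xs Hall ltac:(lra)) as Hsb.
      set (k := cnt (fun x => b1 + d <= x) (fun x => Rle_dec (b1 + d) x) xs) in *.
      rewrite Hlen in Hsb.
      assert (HnS : 0 < INR (S n)) by (apply lt_0_INR; lia).
      assert (Hs : sumR xs = z * INR (S n)).
      { rewrite <- Hsum. field. lra. }
      assert (HNn : INR N <= INR (S n)) by (apply le_INR; lia).
      assert (Hk : INR k0 * (M - d) <= INR k * (M - d)).
      { assert (INR (S n) * d <= INR k * (M - d)).
        { rewrite Hs in Hsb. assert (z * INR (S n) > (b1 + 2 * d) * INR (S n)).
          { apply Rmult_gt_compat_r; auto. unfold d; lra. }
          lra. }
        assert (INR N * d <= INR (S n) * d) by (apply Rmult_le_compat_r; lra).
        lra. }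
      assert (Hkk : (k0 <= k)%nat).
      { apply INR_le. apply Rmult_le_reg_r with (M - d); lra. }
      eapply Rle_trans. apply (Tn_bound T HT A HA0 _ (fun x => Rle_dec (b1 + d) x) c).
      apply HA0.
      intros x Hx. apply (tailR A (conj H0 (conj H1 Hcut)) b1); auto; lra.
      eapply Rle_trans. apply Tn_rep_mono; eauto. apply Rmax_r. }
  lra.
Qed.

Lemma left_side (T : R -> R -> R) (A : R -> R) (An : nat -> R -> R)
  (HT : is_tnorm T) (HTa : tnorm_archimedean T) (HA : fuzzy_interval A)
  (HAn : forall n z, (1 <= n)%nat -> is_lub (ave_set T A n z) (An n z))
  a1 (Ha1 : 1 <= A a1) (Hcore : forall x, 1 <= A x -> a1 <= x)
  alpha (Hal : 0 < alpha <= 1) eps (Heps : 0 < eps) :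
  exists N : nat, forall n, (N <= n)%nat -> forall z, alpha <= An (S n) z -> a1 - eps <= z.
Proof.
  assert (HA0 : forall x, unit_int (A x)) by apply HA.
  set (d := eps / 2).
  assert (Hd : 0 < d) by (unfold d; lra).
  set (c := A (a1 - d)).
  assert (Hc1 : c < 1).
  { destruct (Rlt_dec c 1); auto. assert (a1 <= a1 - d) by (apply Hcore; unfold c in *; lra). lra. }
  destruct (k0_exists T HT HTa c alpha (HA0 _) Hc1 Hal) as [k0 Hk0].
  destruct HA as [H0 [H1 Hcut]].
  destruct (Hcut alpha Hal) as [a [b [Hab Hi]]].
  set (M := Rmax (a1 - a + 1) (2 * d)).
  assert (HM1 : a1 - a + 1 <= M) by apply Rmax_l.
  assert (HM2 : 2 * d <= M) by apply Rmax_r.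
  set (m := A (a1 - M)).
  assert (Hm : m < alpha).
  { destruct (Rlt_dec m alpha); auto. assert (a <= a1 - M) by (apply Hi; unfold m in *; lra). lra. }
  destruct (N_exists k0 d (M - d) Hd) as [N HN].
  exists N. intros n Hn z Hz.
  destruct (Rle_dec (a1 - eps) z) as [h|h]; auto. exfalso.
  set (beta := Rmax m (Tn T (repeat c k0))).
  assert (Hbeta : beta < alpha) by (unfold beta; apply Rmax_lub_lt; auto).
  assert (HAnb : An (S n) z <= beta).
  { apply (HAn (S n) z ltac:(lia)). intros t [xs [Hlen [Hsum ->]]].
    destruct (classic (exists x, In x xs /\ x <= a1 - M)) as [[x [Hx1 Hx2]]|Hno].
    - eapply Rle_trans. apply (Tn_le_in T HT A HA0 x xs Hx1).
      eapply Rle_trans. apply (tailL A (conj H0 (conj H1 Hcut)) a1 (a1 - M) x); auto; lra.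
      apply Rmax_l.
    - assert (Hall : forall x, In x xs -> a1 - M < x).
      { intros x Hx. destruct (Rlt_dec (a1 - M) x); auto. exfalso; apply Hno; exists x; split; auto; lra. }
      pose proof (sum_boundL a1 d M xs Hall ltac:(lra)) as Hsb.
      set (k := cnt (fun x => x <= a1 - d) (fun x => Rle_dec x (a1 - d)) xs) in *.
      rewrite Hlen in Hsb.
      assert (HnS : 0 < INR (S n)) by (apply lt_0_INR; lia).
      assert (Hs : sumR xs = z * INR (S n)).
      { rewrite <- Hsum. field. lra. }
      assert (HNn : INR N <= INR (S n)) by (apply le_INR; lia).
      assert (Hk : INR k0 * (M - d) <= INR k * (M - d)).
      { assert (INR (S n) * d <= INR k * (M - d)).
        { rewrite Hs in Hsb. assert (z * INR (S n) < (a1 - 2 * d) * INR (S n)).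
          { apply Rmult_lt_compat_r; auto. unfold d; lra. }
          lra. }
        assert (INR N * d <= INR (S n) * d) by (apply Rmult_le_compat_r; lra).
        lra. }
      assert (Hkk : (k0 <= k)%nat).
      { apply INR_le. apply Rmult_le_reg_r with (M - d); lra. }
      eapply Rle_trans. apply (Tn_bound T HT A HA0 _ (fun x => Rle_dec x (a1 - d)) c).
      apply HA0.
      intros x Hx. apply (tailL A (conj H0 (conj H1 Hcut)) a1); auto; lra.
      eapply Rle_trans. apply Tn_rep_mono; eauto. apply Rmax_r. }
  lra.
Qed.

Lemma sumR_repeat y k : sumR (repeat y k) = INR k * y.
Proof. induction k; simpl repeat; cbn [sumR fold_right] in *. simpl; lra.
  change (fold_right Rplus 0 (repeat y k)) with (sumR (repeat y k)). rewrite IHk, S_INR; lra. Qed.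

Theorem mainTheorem9 (T : R -> R -> R) (A : R -> R) (An : nat -> R -> R)
  (HT : is_tnorm T) (HTc : tnorm_continuous T) (HTa : tnorm_archimedean T)
  (HA : fuzzy_interval A)
  (HAn : forall n z, (1 <= n)%nat -> is_lub (ave_set T A n z) (An n z)) :
  forall alpha, 0 < alpha <= 1 ->
    hausdorff_conv (fun n z => alpha <= An (S n) z) (fun y => 1 <= A y).
Proof.
  intros alpha Hal eps Heps.
  pose proof HA as [H0 [H1 Hcut]].
  destruct (Hcut 1 ltac:(lra)) as [a1 [b1 [Hab Hi]]].
  destruct (right_side T A An HT HTa HA HAn b1 ltac:(apply Hi; lra)
     ltac:(intros x Hx; apply Hi in Hx; lra) alpha Hal eps Heps) as [NR HR].
  destruct (left_side T A An HT HTa HA HAn a1 ltac:(apply Hi; lra)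
     ltac:(intros x Hx; apply Hi in Hx; lra) alpha Hal eps Heps) as [NL HL].
  exists (Nat.max NR NL). intros n Hn. split.
  - intros z Hz. pose proof (HR n ltac:(lia) z Hz). pose proof (HL n ltac:(lia) z Hz).
    destruct (Rlt_dec z a1).
    + exists a1. split. apply Hi; lra. unfold Rabs; destruct Rcase_abs; lra.
    + destruct (Rlt_dec b1 z).
      * exists b1. split. apply Hi; lra. unfold Rabs; destruct Rcase_abs; lra.
      * exists z. split. apply Hi; lra. unfold Rminus; rewrite Rplus_opp_r, Rabs_R0; lra.
  - intros y Hy. exists y. split.
    + assert (Ay : A y = 1) by (destruct (H0 y); lra).
      apply Rle_trans with 1; [lra|].
      apply (HAn (S n) y ltac:(lia)). exists (repeat y (S n)). split; [apply repeat_length|].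
      split.
      * rewrite sumR_repeat. field. apply not_0_INR; lia.
      * rewrite map_repeat, Ay. clear -HT. induction (S n); simpl; auto.
        rewrite <- IHn0. rewrite T_one; auto using unit1.
    + unfold Rminus; rewrite Rplus_opp_r, Rabs_R0; lra.
Qed.
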